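(* Let $\epsilon\in(0,1)$, $u_0\in\mathbb{R}$, $h>0$, and let $(u_n)_{n\ge0}$ be a sequence of real numbers starting at $u_0$ and satisfying the implicit midpoint scheme $$\frac{u_n-u_{n-1}}{h}+\frac{1}{\epsilon^2}f\!\left(\frac{u_n+u_{n-1}}{2}\right)=0,\qquad n\ge1,\quad f(u)=u^3-u.$$ (i) If $u_0\in\{0,1,-1\}$ and $h\le2\epsilon^2$, then $u_n=\mathrm{sign}(u_0)$ for all $n\ge1$. (ii) If $u_0\notin\{0,1,-1\}$, define $h^*=h^*(u_0,\epsilon)=\frac{8\epsilon^2}{u_0^2+4|u_0|+3}$ if $|u_0|>1$ and $h^*=\epsilon^2$ if $0<|u_0|<1$. Then $h^*>0$ and for every $h\in(0,h^*]$ the sequence $(u_n)$ is monotone and converges to $\mathrm{sign}(u_0)$ as $n\to\infty$.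
   Context: The scheme discretizes the ODE $u'(t)+\frac{1}{\epsilon^2}(u^3-u)=0$, $u(0)=u_0$. For $h\le2\epsilon^2$ each step equation has a unique real solution. Here $\mathrm{sign}(0)=0$. *)

(* Defs.v *)
From Stdlib Require Import Reals Lra.
Open Scope R_scope.

Definition fAC (u : R) : R := u ^ 3 - u.

Definition sgn (x : R) : R :=
  if Rlt_dec 0 x then 1 else if Rlt_dec x 0 then -1 else 0.

Definition midpoint_step (eps h a b : R) : Prop :=
  (b - a) / h + / (eps ^ 2) * fAC ((b + a) / 2) = 0.

(* the threshold h^*(u0, eps) (only meaningful for u0 not in {0,1,-1}) *)
Definition hstar (u0 eps : R) : R :=
  if Rlt_dec 1 (Rabs u0) then 8 * eps ^ 2 / (u0 ^ 2 + 4 * Rabs u0 + 3)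
  else eps ^ 2.

Definition monotone_seq (u : nat -> R) : Prop :=
  (forall n, u n <= u (S n)) \/ (forall n, u (S n) <= u n).

(* Main.v *)
Require Import Defs.
From Stdlib Require Import Reals Lra Psatz.
Open Scope R_scope.

Lemma step_g eps h a b : 0 < eps -> 0 < h -> midpoint_step eps h a b ->
  2 * ((b + a) / 2 - a) + (h / eps ^ 2) * (((b + a) / 2) ^ 3 - (b + a) / 2) = 0.
Proof.
  intros He Hh H. unfold midpoint_step, fAC in H.
  assert (E : 2 * ((b + a) / 2 - a) + (h / eps ^ 2) * (((b + a) / 2) ^ 3 - (b + a) / 2)
     = h * ((b - a) / h + / eps ^ 2 * (((b + a) / 2) ^ 3 - (b + a) / 2))).
  { field. split; lra. }
  rewrite E, H. ring.
Qed.

Lemma fixed_m k c m : 0 < k <= 2 -> (c = 0 \/ c = 1 \/ c = -1) ->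
  2 * (m - c) + k * (m ^ 3 - m) = 0 -> m = c.
Proof.
  intros Hk Hc Hg.
  assert (F : (m - c) * (2 - k + k * (m^2 + m*c + c^2)) = 0).
  { replace ((m - c) * (2 - k + k * (m^2 + m*c + c^2))) with
      (2 * (m - c) + k * (m ^ 3 - m) - k * (c^3 - c)) by ring.
    rewrite Hg. destruct Hc as [->|[->| ->]]; ring. }
  apply Rmult_integral in F. destruct F as [F|F]; [lra|].
  destruct Hc as [->|[->| ->]].
  - assert (m * m <= 0) by nra. assert (m <= 0 /\ 0 <= m) by (split; nra). lra.
  - exfalso. assert (0 <= k*((m+1/2)*(m+1/2))) by (apply Rmult_le_pos; [lra| apply Rle_0_sqr]). nra.
  - exfalso. assert (0 <= k*((m-1/2)*(m-1/2))) by (apply Rmult_le_pos; [lra| apply Rle_0_sqr]). nra.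
Qed.

Lemma div_nonneg a b : 0 <= a -> 0 < b -> 0 <= a / b.
Proof. intros. unfold Rdiv. apply Rmult_le_pos; [assumption|]. left. apply Rinv_0_lt_compat. assumption. Qed.

Lemma sqf x y : 0 <= x^2 + x*y + y^2.
Proof.
  pose proof (Rle_0_sqr (x + y/2)). pose proof (Rle_0_sqr y). unfold Rsqr in *. nra.
Qed.

Lemma small_step u0 k a m : 0 < u0 -> u0 <= a <= 1 -> 0 < k <= 1 ->
  2 * (m - a) + k * (m ^ 3 - m) = 0 ->
  a <= 2*m - a <= 1 /\
  (1 + k*u0*(1+u0)/2) * (1 - (2*m - a)) <= (1 - k*u0*(1+u0)/2) * (1 - a).
Proof.
  intros Hu Ha Hk Hg.
  assert (P : 0 < 2 - k + k * (m^2 + m*a + a^2))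
    by (pose proof (sqf m a); assert (0 <= k * (m^2 + m*a + a^2)) by (apply Rmult_le_pos; lra); lra).
  assert (E1 : (m - a) * (2 - k + k * (m^2 + m*a + a^2)) = k * a * (1 - a) * (1 + a)) by nra.
  assert (Hma : a <= m).
  { destruct (Rle_or_lt a m) as [|Hlt]; [assumption|].
    assert (0 <= k * a * (1 - a) * (1 + a)).
    { apply Rmult_le_pos; [|lra]. apply Rmult_le_pos; [|lra]. nra. }
    nra. }
  set (m1 := (a + 1) / 2).
  assert (P1 : 0 < 2 - k + k * (m^2 + m*m1 + m1^2))
    by (pose proof (sqf m m1); assert (0 <= k * (m^2 + m*m1 + m1^2)) by (apply Rmult_le_pos; lra); lra).
  assert (E2 : (m - m1) * (2 - k + k * (m^2 + m*m1 + m1^2)) =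
               - (1 - a) * (1 - k * m1 * (m1 + 1) / 2)) by (unfold m1; nra).
  assert (Q : 0 <= 1 - k * m1 * (m1 + 1) / 2).
  { assert (m1 * (m1 + 1) <= 2) by (unfold m1; nra). nra. }
  assert (Hm1 : m <= m1).
  { destruct (Rle_or_lt m m1) as [|Hlt]; [assumption|].
    assert (0 <= (1 - a) * (1 - k * m1 * (m1 + 1) / 2)) by (apply Rmult_le_pos; lra).
    nra. }
  unfold m1 in Hm1.
  split; [lra|].
  set (e := 1 - a). set (e' := 1 - (2*m - a)).
  assert (Ee : e - e' = k * m * (1 + m) / 2 * (e + e')) by (unfold e, e'; nra).
  assert (Hc : k*u0*(1+u0)/2 <= k * m * (1 + m) / 2).
  { assert (u0 * (1 + u0) <= m * (1 + m)) by nra. nra. }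
  assert (0 <= e + e') by (unfold e, e'; lra).
  nra.
Qed.

Lemma large_step u0 k a m : 1 <= a <= u0 -> 0 < k -> k * (u0^2 + 4*u0 + 3) <= 8 ->
  2 * (m - a) + k * (m ^ 3 - m) = 0 ->
  1 <= 2*m - a <= a /\
  (1 + k) * ((2*m - a) - 1) <= (1 - k) * (a - 1).
Proof.
  intros Ha Hk Hk8 Hg.
  assert (Hk1 : k <= 1) by nra.
  assert (P : 0 < 2 - k + k * (m^2 + m*a + a^2))
    by (pose proof (sqf m a); assert (0 <= k * (m^2 + m*a + a^2)) by (apply Rmult_le_pos; lra); lra).
  assert (E1 : (m - a) * (2 - k + k * (m^2 + m*a + a^2)) = - (k * a * (a - 1) * (a + 1))) by nra.
  assert (Hma : m <= a).
  { destruct (Rle_or_lt m a) as [|Hlt]; [assumption|].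
    assert (0 <= k * a * (a - 1) * (a + 1)).
    { apply Rmult_le_pos; [|lra]. apply Rmult_le_pos; [|lra]. nra. }
    nra. }
  set (m1 := (a + 1) / 2).
  assert (P1 : 0 < 2 - k + k * (m^2 + m*m1 + m1^2))
    by (pose proof (sqf m m1); assert (0 <= k * (m^2 + m*m1 + m1^2)) by (apply Rmult_le_pos; lra); lra).
  assert (E2 : (m - m1) * (2 - k + k * (m^2 + m*m1 + m1^2)) =
               (a - 1) * (1 - k * m1 * (m1 + 1) / 2)) by (unfold m1; nra).
  assert (Q : 0 <= 1 - k * m1 * (m1 + 1) / 2).
  { assert (m1 * (m1 + 1) <= (u0^2 + 4*u0 + 3)/4) by (unfold m1; nra). nra. }
  assert (Hm1 : m1 <= m).
  { destruct (Rle_or_lt m1 m) as [|Hlt]; [assumption|].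
    assert (0 <= (a - 1) * (1 - k * m1 * (m1 + 1) / 2)) by (apply Rmult_le_pos; lra).
    nra. }
  unfold m1 in Hm1.
  split; [lra|].
  set (e := a - 1). set (e' := (2*m - a) - 1).
  assert (Ee : e - e' = k * m * (1 + m) / 2 * (e + e')) by (unfold e, e'; nra).
  assert (Hc : k <= k * m * (1 + m) / 2) by nra.
  assert (0 <= e + e') by (unfold e, e'; lra).
  nra.
Qed.

Lemma small_step' eps h u0 a b : 0 < eps -> 0 < h -> 0 < u0 -> u0 <= a <= 1 -> h / eps^2 <= 1 ->
  midpoint_step eps h a b ->
  a <= b <= 1 /\
  (1 + (h/eps^2)*u0*(1+u0)/2) * (1 - b) <= (1 - (h/eps^2)*u0*(1+u0)/2) * (1 - a).
Proof.
  intros He Hh Hu Ha Hk Hs.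
  pose proof (step_g _ _ _ _ He Hh Hs) as G.
  assert (Hk0 : 0 < h / eps^2) by (apply Rdiv_lt_0_compat; [lra| apply pow_lt; lra]).
  destruct (small_step u0 (h/eps^2) a ((b+a)/2) Hu Ha (conj Hk0 Hk) G) as [A B].
  replace (2 * ((b + a) / 2) - a) with b in * by field. auto.
Qed.

Lemma large_step' eps h u0 a b : 0 < eps -> 0 < h -> 1 <= a <= u0 ->
  (h/eps^2) * (u0^2 + 4*u0 + 3) <= 8 ->
  midpoint_step eps h a b ->
  1 <= b <= a /\ (1 + h/eps^2) * (b - 1) <= (1 - h/eps^2) * (a - 1).
Proof.
  intros He Hh Ha Hk Hs.
  pose proof (step_g _ _ _ _ He Hh Hs) as G.
  assert (Hk0 : 0 < h / eps^2) by (apply Rdiv_lt_0_compat; [lra| apply pow_lt; lra]).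
  destruct (large_step u0 (h/eps^2) a ((b+a)/2) Ha Hk0 Hk G) as [A B].
  replace (2 * ((b + a) / 2) - a) with b in * by field. auto.
Qed.

Lemma conv_geom (u : nat -> R) s r C : 0 <= r < 1 -> 0 <= C ->
  (forall n, Rabs (u n - s) <= r^n * C) -> Un_cv u s.
Proof.
  intros Hr HC Hb e He.
  assert (Hr' : Rabs r < 1) by (rewrite Rabs_pos_eq; lra).
  assert (Hy : 0 < e / (C + 1)) by (apply Rdiv_lt_0_compat; lra).
  destruct (pow_lt_1_zero r Hr' _ Hy) as [N HN].
  exists N. intros n Hn. unfold R_dist.
  specialize (HN n Hn). specialize (Hb n).
  rewrite Rabs_pos_eq in HN by (apply pow_le; lra).
  assert (0 <= r^n) by (apply pow_le; lra).
  assert (r^n * (C+1) < e).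
  { apply (Rmult_lt_compat_r (C+1)) in HN; [|lra].
    replace (e / (C + 1) * (C + 1)) with e in HN by (field; lra). exact HN. }
  nra.
Qed.

Lemma step_neg eps h a b : midpoint_step eps h a b -> midpoint_step eps h (-a) (-b).
Proof.
  unfold midpoint_step, fAC. intros H.
  replace ((- b - - a) / h + / eps ^ 2 * (((- b + - a) / 2) ^ 3 - (- b + - a) / 2))
    with (- ((b - a) / h + / eps ^ 2 * (((b + a) / 2) ^ 3 - (b + a) / 2)))
    by (unfold Rdiv; ring).
  rewrite H. ring.
Qed.

Lemma pos_case eps h u0 (u : nat -> R) : 0 < eps -> 0 < h -> u 0%nat = u0 ->
  (forall n : nat, midpoint_step eps h (u n) (u (S n))) ->
  0 < u0 -> u0 <> 1 -> h <= hstar u0 eps -> monotone_seq u /\ Un_cv u 1.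
Proof.
  intros He Hh H0 Hs Hu Hu1 Hh'.
  unfold hstar in Hh'. rewrite Rabs_pos_eq in Hh' by lra.
  assert (Hee : 0 < eps^2) by (apply pow_lt; lra).
  set (k := h / eps^2).
  assert (Hk0 : 0 < k) by (apply Rdiv_lt_0_compat; lra).
  destruct (Rlt_dec 1 u0) as [Hg1|Hg1].
  - set (D := u0^2 + 4*u0 + 3).
    assert (HD : 8 <= D) by (unfold D; nra).
    assert (Hk : k * D <= 8).
    { apply (Rmult_le_reg_r (eps^2)); [lra|].
      replace (k * D * eps^2) with (h * D) by (unfold k; field; lra).
      apply (Rmult_le_compat_r D) in Hh'; [|lra].
      replace (8 * eps ^ 2 / (u0 ^ 2 + 4 * u0 + 3) * D) with (8 * eps^2) in Hh'
        by (unfold D; field; nra). lra. }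
    assert (Hk1 : k <= 1) by nra.
    assert (Inv : forall n, 1 <= u n <= u0 /\ u n - 1 <= ((1-k)/(1+k))^n * (u0 - 1)).
    { induction n as [|n [IH1 IH2]].
      - rewrite H0. simpl. lra.
      - destruct (large_step' eps h u0 (u n) (u (S n)) He Hh ltac:(lra) Hk (Hs n)) as [A B].
        fold k in A, B. split; [lra|]. simpl.
        assert (u (S n) - 1 <= (1-k)/(1+k) * (u n - 1)).
        { apply (Rmult_le_reg_l (1+k)); [lra|].
          replace ((1 + k) * ((1 - k) / (1 + k) * (u n - 1))) with ((1-k)*(u n - 1))
            by (field; lra). lra. }
        assert (0 <= (1-k)/(1+k)) by (apply div_nonneg; lra).
        nra. }
    split.
    + right. intros n.
      destruct (Inv n) as [A _].
      destruct (large_step' eps h u0 (u n) (u (S n)) He Hh A Hk (Hs n)). lra.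
    + apply (conv_geom u 1 ((1-k)/(1+k)) (u0 - 1)).
      * split; [apply div_nonneg; lra|].
        apply (Rmult_lt_reg_r (1+k)); [lra|].
        replace ((1 - k) / (1 + k) * (1 + k)) with (1-k) by (field; lra). lra.
      * lra.
      * intros n. destruct (Inv n) as [A B]. rewrite Rabs_pos_eq by lra. exact B.
  - assert (Hlt : u0 < 1) by lra.
    assert (Hk : k <= 1).
    { unfold k. apply (Rmult_le_reg_r (eps^2)); [lra|].
      replace (h / eps ^ 2 * eps ^ 2) with h by (field; lra). lra. }
    set (c := k*u0*(1+u0)/2).
    assert (Hc0 : 0 < c) by (unfold c; nra).
    assert (Hc1 : c < 1) by (unfold c; nra).
    assert (Inv : forall n, u0 <= u n <= 1 /\ 1 - u n <= ((1-c)/(1+c))^n * (1 - u0)).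
    { induction n as [|n [IH1 IH2]].
      - rewrite H0. simpl. lra.
      - destruct (small_step' eps h u0 (u n) (u (S n)) He Hh Hu IH1 Hk (Hs n)) as [A B].
        fold k in A, B. fold c in B. split; [lra|]. simpl.
        assert (1 - u (S n) <= (1-c)/(1+c) * (1 - u n)).
        { apply (Rmult_le_reg_l (1+c)); [lra|].
          replace ((1 + c) * ((1 - c) / (1 + c) * (1 - u n))) with ((1-c)*(1 - u n))
            by (field; lra). lra. }
        assert (0 <= (1-c)/(1+c)) by (apply div_nonneg; lra).
        nra. }
    split.
    + left. intros n.
      destruct (Inv n) as [A _].
      destruct (small_step' eps h u0 (u n) (u (S n)) He Hh Hu A Hk (Hs n)). lra.
    + apply (conv_geom u 1 ((1-c)/(1+c)) (1 - u0)).
      * split; [apply div_nonneg; lra|].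
        apply (Rmult_lt_reg_r (1+c)); [lra|].
        replace ((1 - c) / (1 + c) * (1 + c)) with (1-c) by (field; lra). lra.
      * lra.
      * intros n. destruct (Inv n) as [A B]. rewrite Rabs_minus_sym, Rabs_pos_eq by lra. exact B.
Qed.

Theorem theorem3p7 (eps u0 h : R) (u : nat -> R) :
  0 < eps < 1 -> 0 < h -> u 0%nat = u0 ->
  (forall n : nat, midpoint_step eps h (u n) (u (S n))) ->
  ((u0 = 0 \/ u0 = 1 \/ u0 = -1) -> h <= 2 * eps ^ 2 ->
      forall n : nat, (1 <= n)%nat -> u n = sgn u0) /\
  (~ (u0 = 0 \/ u0 = 1 \/ u0 = -1) ->
      0 < hstar u0 eps /\
      (h <= hstar u0 eps -> monotone_seq u /\ Un_cv u (sgn u0))).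
Proof.
  intros [He He1] Hh H0 Hs.
  assert (Hee : 0 < eps^2) by (apply pow_lt; lra).
  split.
  - intros Hc Hk2 n _.
    assert (Hk : 0 < h / eps^2 <= 2).
    { split; [apply Rdiv_lt_0_compat; lra|].
      apply (Rmult_le_reg_r (eps^2)); [lra|].
      replace (h / eps ^ 2 * eps ^ 2) with h by (field; lra). lra. }
    assert (All : forall n, u n = u0).
    { induction n0 as [|n0 IH]; [exact H0|].
      pose proof (step_g _ _ _ _ He Hh (Hs n0)) as G. rewrite IH in G.
      pose proof (fixed_m _ _ _ Hk Hc G). lra. }
    rewrite All. unfold sgn.
    destruct Hc as [->|[->| ->]]; destruct (Rlt_dec 0 _); try lra; destruct (Rlt_dec _ 0); lra.
  - intros Hn. split.
    + unfold hstar. destruct (Rlt_dec 1 (Rabs u0)); [|lra].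
      apply Rdiv_lt_0_compat; [lra|]. pose proof (Rabs_pos u0). nra.
    + intros Hh'. destruct (Rlt_or_le 0 u0) as [Hp|Hp].
      * assert (sgn u0 = 1) as -> by (unfold sgn; destruct (Rlt_dec 0 u0); lra).
        apply (pos_case eps h u0 u); auto; lra.
      * assert (Hneg : u0 < 0) by (destruct Hp; [assumption| exfalso; tauto]).
        assert (sgn u0 = -1) as ->.
        { unfold sgn; destruct (Rlt_dec 0 u0); [lra|]. destruct (Rlt_dec u0 0); lra. }
        assert (Hhs : hstar (-u0) eps = hstar u0 eps) by (unfold hstar; rewrite Rabs_Ropp; replace ((-u0)^2) with (u0^2) by ring; reflexivity).
        destruct (pos_case eps h (-u0) (fun n => - u n)) as [Hm Hc]; auto.
        -- rewrite H0; reflexivity.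
        -- intros n. apply step_neg. apply Hs.
        -- lra.
        -- lra.
        -- rewrite Hhs; assumption.
        -- split.
           ++ destruct Hm as [Hm|Hm]; [right|left]; intros n; specialize (Hm n); lra.
           ++ intros e Hep. destruct (Hc e Hep) as [N HN]. exists N. intros n Hn'.
              specialize (HN n Hn'). unfold R_dist in *.
              replace (u n - -1) with (-(- u n - 1)) by ring. rewrite Rabs_Ropp. exact HN.
Qed.
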